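(* The $\mathbf k$-linear map $\varphi:\mathrm{WCQSym}\to\mathrm{QSym}$, defined by $\varphi(M_\alpha)=(-1)^{\ell_\varepsilon(\alpha)}M_{\bar\alpha}$ if $\alpha\in\mathcal C_N$ and $\varphi(M_\alpha)=0$ if $\alpha\in\mathcal C_\varepsilon$, is an algebra homomorphism.
   Context: $\tilde{\mathbb N}=\mathbb N\cup\{\varepsilon\}$ with $0+\varepsilon=\varepsilon+\varepsilon=\varepsilon$ and $n+\varepsilon=n$ for integers $n\ge1$. $\mathbf{k}$ is a commutative ring containing $\mathbb Q$; $\mathbf{k}[[X]]_{\tilde{\mathbb N}}$, $X=\{x_1<x_2<\cdots\}$, is the algebra of possibly infinite linear combinations of formal monomials $\prod x_i^{f(x_i)}$ with $f$ finitely supported $\tilde{\mathbb N}$-valued, multiplied by adding exponents in $\tilde{\mathbb N}$. An $\tilde{\mathbb N}$-composition is a finite (possibly empty) sequence of elements of $\{\varepsilon,1,2,\dots\}$; $M_{(\alpha_1,\dots,\alpha_k)}=\sum_{1\le i_1<\cdots<i_k}x_{i_1}^{\alpha_1}\cdots x_{i_k}^{\alpha_k}$, $M_\emptyset=1$. $\mathrm{WCQSym}$ is the $\mathbf k$-span of all $M_\alpha$ (a subalgebra with the $M_\alpha$ as basis), and $\mathrm{QSym}$ the span of those with all entries positive integers. $\ell_\varepsilon(\alpha)$ is the number of entries equal to $\varepsilon$, $\bar\alpha$ is $\alpha$ with its $\varepsilon$ entries deleted. $\mathcal C_\varepsilon$ is the set of $\tilde{\mathbb N}$-compositions whose first entry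 is $\varepsilon$, $\mathcal C_N$ the set of all others (including the empty one). *)

(* Defs.v *)
From mathcomp Require Import all_boot all_algebra.
Set Implicit Arguments. Unset Strict Implicit. Unset Printing Implicit Defensive.
Import GRing.Theory.
Local Open Scope ring_scope.

(* Ñ = N ∪ {ε}:  None = ε,  Some n = the integer n. *)
Definition tN := option nat.

Definition tadd (a b : tN) : tN :=
  match a, b with
  | Some m, Some n => Some (m + n)%N
  | None, None => None
  | Some 0, None | None, Some 0 => None
  | Some n, None | None, Some n => Some n
  end.

(* A monomial prod_i x_i^{f(x_i)} is represented by the finite sequence
   [f(x_1); ...; f(x_n)] of exponents (trailing Some 0 entries are
   irrelevant; all series used below are invariant under them). *)
Definition monomial := seq tN.

Definition series (k : Type) := monomial -> k.

Definition tbound (e : tN) : nat := if e is Some n then n else 0%N.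
Definition tcands (e : tN) : seq tN := None :: [seq Some i | i <- iota 0 (tbound e).+1].
Definition splits (e : tN) : seq (tN * tN) :=
  [seq p <- [seq (a, b) | a <- tcands e, b <- tcands e] | tadd p.1 p.2 == e].

Fixpoint decomps (m : monomial) : seq (monomial * monomial) :=
  match m with
  | [::] => [:: ([::], [::])]
  | e :: m' => [seq (p.1 :: q.1, p.2 :: q.2) | p <- splits e, q <- decomps m']
  end.

Definition smul (k : comRingType) (F G : series k) : series k :=
  fun m => \sum_(q <- decomps m) F q.1 * G q.2.

(* Ñ-compositions: finite sequences with entries in {ε,1,2,...} *)
Definition wcomp (a : seq tN) : bool := all (fun e => e != Some 0%N) a.

Definition compress (m : monomial) : seq tN := [seq e <- m | e != Some 0%N].

Definition M (k : comRingType) (alpha : seq tN) : series k :=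
  fun m => (compress m == alpha)%:R.

Definition Msum (k : comRingType) (l : seq (seq tN * k)) : series k :=
  fun m => \sum_(p <- l) p.2 * M k p.1 m.

Definition ell_eps (a : seq tN) : nat := count (fun e => e == None) a.
Definition bar (a : seq tN) : seq tN := [seq e <- a | e != None].
Definition in_Ceps (a : seq tN) : bool := if a is None :: _ then true else false.

Definition phi (k : comRingType) (l : seq (seq tN * k)) : seq (seq tN * k) :=
  [seq (bar p.1, (-1) ^+ ell_eps p.1 * p.2) | p <- l & ~~ in_Ceps p.1].

(* Main.v *)
Require Import Defs.
From mathcomp Require Import all_boot all_algebra.
From mathcomp Require Import ring.
From Stdlib Require Import FunctionalExtensionality.
Set Implicit Arguments. Unset Strict Implicit. Unset Printing Implicit Defensive.
Import GRing.Theory.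
Local Open Scope ring_scope.

Fixpoint qsh (a b : seq tN) {struct a} : seq (seq tN) :=
  match a with
  | [::] => [:: b]
  | x :: a' => let fix qb (b : seq tN) : seq (seq tN) :=
       match b with
       | [::] => [:: x :: a']
       | y :: b' => [seq x :: d | d <- qsh a' b] ++ [seq y :: d | d <- qb b']
                    ++ [seq tadd x y :: d | d <- qsh a' b']
       end in qb b
  end.

Lemma qsh0l b : qsh [::] b = [:: b]. Proof. by []. Qed.
Lemma qsh0r a : qsh a [::] = [:: a]. Proof. by case: a. Qed.
Lemma qshcc x a y b : qsh (x :: a) (y :: b) =
  [seq x :: d | d <- qsh a (y :: b)] ++ [seq y :: d | d <- qsh (x :: a) b]
  ++ [seq tadd x y :: d | d <- qsh a b].
Proof. by []. Qed.

Section S.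
Variable k : comRingType.

Definition sg (a : seq tN) : k := (-1) ^+ ell_eps a.

Lemma sg0 : sg [::] = 1. Proof. by rewrite /sg expr0. Qed.
Lemma sgN a : sg (None :: a) = - sg a.
Proof. by rewrite /sg /= exprD expr1 mulN1r. Qed.
Lemma sgS n a : sg (Some n :: a) = sg a.
Proof. by rewrite /sg /= add0n. Qed.
Lemma barN a : bar (None :: a) = bar a. Proof. by []. Qed.
Lemma barS n a : bar (Some n :: a) = Some n :: bar a. Proof. by []. Qed.

Lemma wcons x a : wcomp (x :: a) = (x != Some 0%N) && wcomp a.
Proof. by []. Qed.

Lemma taddNS n : (0 < n)%N -> tadd None (Some n) = Some n.
Proof. by case: n. Qed.
Lemma taddSN n : (0 < n)%N -> tadd (Some n) None = Some n.
Proof. by case: n. Qed.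

Lemma sum_cons3 (z : tN) (L : seq (seq tN)) (F : seq tN -> k) :
  \sum_(d <- [seq z :: d | d <- L]) F d = \sum_(d <- L) F (z :: d).
Proof. by rewrite big_map. Qed.

Lemma taddSS n m : tadd (Some n) (Some m) = Some (n + m)%N. Proof. by case: n; case: m. Qed.
Lemma taddNN : tadd None None = None. Proof. by []. Qed.

Lemma sum_qshcc x a y b (F : seq tN -> k) :
  \sum_(d <- qsh (x :: a) (y :: b)) F d =
  \sum_(d <- qsh a (y :: b)) F (x :: d) + \sum_(d <- qsh (x :: a) b) F (y :: d)
  + \sum_(d <- qsh a b) F (tadd x y :: d).
Proof. rewrite qshcc !big_cat !big_map; exact: addrA. Qed.

Lemma sumS n (L : seq (seq tN)) (f : seq tN -> k) :
  \sum_(d <- L) sg (Some n :: d) * f (bar (Some n :: d)) =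
  \sum_(d <- L) sg d * (fun d => f (Some n :: d)) (bar d).
Proof. by apply: eq_bigr => d _; rewrite sgS barS. Qed.
Lemma sumN (L : seq (seq tN)) (f : seq tN -> k) :
  \sum_(d <- L) sg (None :: d) * f (bar (None :: d)) =
  - \sum_(d <- L) sg d * f (bar d).
Proof. rewrite -sumrN; by apply: eq_bigr => d _; rewrite sgN barN mulNr. Qed.

Lemma qshA (a b : seq tN) (f : seq tN -> k) : wcomp a -> wcomp b ->
  \sum_(d <- qsh a b) sg d * f (bar d) =
  sg a * sg b * \sum_(d <- qsh (bar a) (bar b)) f d.
Proof.
elim: a b f => [|x a IHa] b f.
  by move=> _ _; rewrite qsh0l /= !big_seq1 sg0 mul1r.
elim: b f => [|y b IHb] f.
  by move=> _ _; rewrite !qsh0r !big_seq1 sg0 mulr1.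
rewrite !wcons => /andP[hx ha] /andP[hy hb].
rewrite sum_qshcc.
have hyb : wcomp (y :: b) by rewrite wcons hy hb.
have hxa : wcomp (x :: a) by rewrite wcons hx ha.
have IH1 := fun f => IHa (y :: b) f ha hyb.
have IH2 := fun f => IHb f hxa hb.
have IH3 := fun f => IHa b f ha hb.
clear IHa IHb hxa hyb.
case: x hx IH1 IH2 IH3 => [n|] hx IH1 IH2 IH3; case: y hy IH1 IH2 IH3 => [m|] hy IH1 IH2 IH3.
- have hn : (0 < n)%N by rewrite lt0n; apply/eqP => h; rewrite h in hx.
  have hm : (0 < m)%N by rewrite lt0n; apply/eqP => h; rewrite h in hy.
  rewrite taddSS !sumS (IH1 (fun d => f (Some n :: d))) (IH2 (fun d => f (Some m :: d)))
          (IH3 (fun d => f (Some (n + m)%N :: d))).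
  rewrite !barS !sgS sum_qshcc taddSS.
  ring.
- have hn : (0 < n)%N by rewrite lt0n; apply/eqP => h; rewrite h in hx.
  rewrite taddSN // !sumS sumN (IH1 (fun d => f (Some n :: d))) IH2
          (IH3 (fun d => f (Some n :: d))).
  rewrite !barS !barN !sgS !sgN.
  ring.
- have hm : (0 < m)%N by rewrite lt0n; apply/eqP => h; rewrite h in hy.
  rewrite taddNS // !sumS sumN IH1 (IH2 (fun d => f (Some m :: d)))
          (IH3 (fun d => f (Some m :: d))).
  rewrite !barS !barN !sgS !sgN.
  ring.
- rewrite taddNN !sumN IH1 IH2 IH3 !barN !sgN.
  ring.
Qed.

Lemma sumBS n (L : seq (seq tN)) (f : seq tN -> k) :
  \sum_(d <- L) (~~ in_Ceps (Some n :: d))%:R * sg (Some n :: d) * f (bar (Some n :: d)) =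
  \sum_(d <- L) sg d * (fun d => f (Some n :: d)) (bar d).
Proof. by apply: eq_bigr => d _; rewrite sgS barS /= mul1r. Qed.
Lemma sumBN (L : seq (seq tN)) (f : seq tN -> k) :
  \sum_(d <- L) (~~ in_Ceps (None :: d))%:R * sg (None :: d) * f (bar (None :: d)) = 0.
Proof. by rewrite big1 // => d _; rewrite /= !mul0r. Qed.

Lemma qshB (a b : seq tN) (f : seq tN -> k) : wcomp a -> wcomp b ->
  \sum_(d <- qsh a b) (~~ in_Ceps d)%:R * sg d * f (bar d) =
  (~~ in_Ceps a)%:R * (~~ in_Ceps b)%:R * (sg a * sg b) *
     \sum_(d <- qsh (bar a) (bar b)) f d.
Proof.
case: a => [|x a].
  by move=> _ _; rewrite qsh0l /= !big_seq1 sg0 !mul1r.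
case: b => [|y b].
  by move=> _ _; rewrite !qsh0r !big_seq1 sg0 !mulr1.
move=> hxa hyb; move: (hxa) (hyb); rewrite !wcons => /andP[hx ha] /andP[hy hb].
rewrite sum_qshcc.
case: x hx hxa => [n|] hx hxa; case: y hy hyb => [m|] hy hyb.
- rewrite taddSS !sumBS (qshA (fun d => f (Some n :: d))) //
    (qshA (fun d => f (Some m :: d))) // (qshA (fun d => f (Some (n + m)%N :: d))) // !barS !sgS sum_qshcc taddSS /=.
  ring.
- have hn : (0 < n)%N by rewrite lt0n; apply/eqP => h; rewrite h in hx.
  rewrite taddSN // sumBN !sumBS !(qshA (fun d => f (Some n :: d))) // !barS !barN !sgS !sgN /=.
  ring.
- have hm : (0 < m)%N by rewrite lt0n; apply/eqP => h; rewrite h in hy.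
  rewrite taddNS // sumBN !sumBS !(qshA (fun d => f (Some m :: d))) // !barS !barN !sgS !sgN /=.
  ring.
- by rewrite taddNN !sumBN /= !mul0r !addr0.
Qed.
End S.
Arguments sg {k} a.

Lemma tadd0l y : tadd (Some 0%N) y = y. Proof. case: y => [[|n]|]; done. Qed.
Lemma tadd0r x : tadd x (Some 0%N) = x. Proof. case: x => [[|n]|] //=; by rewrite addn0. Qed.
Lemma taddnz x y : x != Some 0%N -> y != Some 0%N -> tadd x y != Some 0%N.
Proof. case: x => [[|n]|]; case: y => [[|m]|]; done. Qed.

Lemma tcands_mem u v : u \in tcands (tadd u v).
Proof.
case: u => [i|]; last exact: mem_head.
rewrite /tcands inE; apply/orP; right; rewrite (mem_map (@Some_inj _)) mem_iota add0n ltnS.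
case: v => [j|]; case: i => [|i] //=; by rewrite ?leq_addr.
Qed.

Lemma tadd_comm u v : tadd u v = tadd v u.
Proof. case: u => [[|i]|]; case: v => [[|j]|] //=; by rewrite addnC. Qed.

Lemma uniq_splits e : uniq (splits e).
Proof.
rewrite /splits filter_uniq // allpairs_uniq //.
- rewrite /tcands cons_uniq (map_inj_uniq (@Some_inj _)) iota_uniq andbT.
  by apply/mapP => -[].
- rewrite /tcands cons_uniq (map_inj_uniq (@Some_inj _)) iota_uniq andbT.
  by apply/mapP => -[].
- by move=> [a b] [c d].
Qed.

Lemma mem_splits e u v : ((u, v) \in splits e) = (tadd u v == e).
Proof.
rewrite /splits mem_filter; case: eqP => [<-|]; last by [].
rewrite andTb; apply: (allpairs_f pair); first exact: tcands_mem.
by rewrite /= tadd_comm; exact: tcands_mem.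
Qed.

Section S.
Variable k : comRingType.

Lemma sum_count (T : eqType) (s : seq T) (w : T) :
  \sum_(p <- s) ((p == w)%:R : k) = (count_mem w s)%:R.
Proof.
elim: s => [|p s IH]; first by rewrite big_nil.
by rewrite big_cons IH /= natrD.
Qed.

Lemma sum_splits e u v :
  \sum_(p <- splits e) ((p.1 == u)%:R * (p.2 == v)%:R : k) = (tadd u v == e)%:R.
Proof.
transitivity (\sum_(p <- splits e) ((p == (u, v))%:R : k)).
  by apply: eq_bigr => -[a b] _; rewrite xpair_eqE /= -natrM mulnb.
by rewrite sum_count count_uniq_mem ?uniq_splits // mem_splits.
Qed.

Lemma smul_nil (F G : series k) : smul F G [::] = F [::] * G [::].
Proof. by rewrite /smul /= big_seq1. Qed.

Lemma smul_cons (F G : series k) e m : smul F G (e :: m) =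
  \sum_(p <- splits e) \sum_(q <- decomps m) F (p.1 :: q.1) * G (p.2 :: q.2).
Proof. by rewrite /smul /= big_allpairs_dep. Qed.

Lemma sum4 (I : Type) (r : seq I) (a b c d : k) (A A' B B' : I -> k) :
  \sum_(i <- r) (a * A i + b * A' i) * (c * B i + d * B' i) =
  a * c * \sum_(i <- r) A i * B i + a * d * \sum_(i <- r) A i * B' i +
  b * c * \sum_(i <- r) A' i * B i + b * d * \sum_(i <- r) A' i * B' i.
Proof.
rewrite !mulr_sumr -!big_split /=; apply: eq_bigr => i _; ring.
Qed.

Lemma smul_gen (F F0 F1 G G0 G1 : series k) x y e m :
  (forall u c, F (u :: c) = (u == Some 0%N)%:R * F0 c + (u == x)%:R * F1 c) ->
  (forall u c, G (u :: c) = (u == Some 0%N)%:R * G0 c + (u == y)%:R * G1 c) ->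
  smul F G (e :: m) =
    (Some 0%N == e)%:R * smul F0 G0 m + (y == e)%:R * smul F0 G1 m +
    (x == e)%:R * smul F1 G0 m + (tadd x y == e)%:R * smul F1 G1 m.
Proof.
move=> hF hG; rewrite smul_cons.
under eq_bigr => p _.
  under eq_bigr => q _ do rewrite hF hG.
  rewrite sum4.
  over.
rewrite /= !big_split /= -!mulr_suml !sum_splits !tadd0l !tadd0r.
by rewrite /smul.
Qed.

Lemma Mcons (a : seq tN) u c : wcomp a ->
  M k a (u :: c) = (u == Some 0%N)%:R * M k a c +
     (u == head None a)%:R * (if a is _ :: a' then M k a' c else 0).
Proof.
move=> ha; rewrite /M /compress /=.
have [->|hu] := eqVneq u (Some 0%N).
  rewrite /= mul1r.
  case: a ha => [|x a] /=; first by rewrite mulr0 addr0.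
  by case/andP => hx _; rewrite (eq_sym (Some 0%N)) (negbTE hx) mul0r addr0.
rewrite /= mul0r add0r.
case: a ha => [|x a] _ /=; first by rewrite mulr0.
rewrite eqseq_cons; case: (u == x); by rewrite ?mul1r ?mul0r.
Qed.


Lemma smul0l (G : series k) m : smul (fun _ => 0) G m = 0.
Proof. by rewrite /smul big1 // => q _; rewrite mul0r. Qed.
Lemma smul0r (F : series k) m : smul F (fun _ => 0) m = 0.
Proof. by rewrite /smul big1 // => q _; rewrite mulr0. Qed.

Definition Mt (a : seq tN) : series k := fun c => if a is _ :: a' then M k a' c else 0.

Lemma Mcons' (a : seq tN) : wcomp a -> forall u c,
  M k a (u :: c) = (u == Some 0%N)%:R * M k a c + (u == head None a)%:R * Mt a c.
Proof. by move=> ha u c; rewrite Mcons. Qed.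

Lemma head_nz (a : seq tN) : wcomp a -> head None a != Some 0%N.
Proof. by case: a => [|x a] //= /andP[]. Qed.

Lemma compress_cons e m : compress (e :: m) =
  if e != Some 0%N then e :: compress m else compress m.
Proof. by []. Qed.

Lemma sum_eqcons (z e : tN) c (L : seq (seq tN)) :
  \sum_(d <- L) ((e :: c == z :: d)%:R : k) = (e == z)%:R * \sum_(d <- L) (c == d)%:R.
Proof. rewrite mulr_sumr; apply: eq_bigr => d _; by rewrite eqseq_cons -mulnb natrM. Qed.

Lemma smulM (a b : seq tN) m : wcomp a -> wcomp b ->
  smul (M k a) (M k b) m = \sum_(d <- qsh a b) (compress m == d)%:R.
Proof.
elim: m a b => [|e m IH] a b ha hb.
  rewrite smul_nil /M /=.
  case: a ha => [|x a] ha; case: b hb => [|y b] hb.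
  - by rewrite qsh0l big_seq1 /= mulr1.
  - by rewrite qsh0l big_seq1 /= mul1r.
  - by rewrite qsh0r big_seq1 /= mulr1.
  - by rewrite sum_qshcc !big1 //= mul0r !addr0.
rewrite (smul_gen _ _ (Mcons' ha) (Mcons' hb)) IH // compress_cons.
have [e0|enz] := eqVneq e (Some 0%N).
  subst e; rewrite mul1r (negbTE (head_nz hb)) (negbTE (head_nz ha)).
  rewrite (negbTE (taddnz (head_nz ha) (head_nz hb))).
  by rewrite !mul0r !addr0.
rewrite mul0r add0r /=.
case: a ha => [|x a] ha; case: b hb => [|y b] hb; rewrite /Mt ?smul0l ?smul0r ?mulr0 ?addr0.
- by rewrite qsh0l big_seq1.
- move: (hb); rewrite wcons => /andP[_ hb'].
  rewrite IH // !qsh0l !big_seq1 /= eqseq_cons -mulnb natrM eq_sym.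
  by [].
- move: (ha); rewrite wcons => /andP[_ ha'].
  rewrite add0r IH // !qsh0r !big_seq1 /= eqseq_cons -mulnb natrM eq_sym.
  by [].
- move: (ha) (hb); rewrite wcons => /andP[_ ha']; rewrite wcons => /andP[_ hb'].
  rewrite !IH // sum_qshcc !sum_eqcons /= !(eq_sym e).
  congr (_ + _); exact: addrC.
Qed.

Lemma compress_w d : wcomp d -> compress d = d.
Proof. by move/all_filterP. Qed.

Lemma bar_w d : wcomp d -> wcomp (bar d).
Proof. by move=> h; rewrite /wcomp /bar all_filter; apply: sub_all h => x hx; apply/implyP. Qed.

Lemma qsh_w a b : wcomp a -> wcomp b -> all wcomp (qsh a b).
Proof.
elim: a b => [|x a IHa] b; first by rewrite qsh0l /= andbT.
elim: b => [|y b IHb]; first by rewrite qsh0r /= andbT.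
move=> hxa hyb; move: (hxa) (hyb); rewrite !wcons => /andP[hx ha] /andP[hy hb].
rewrite qshcc !all_cat !all_map; apply/and3P; split; apply/allP => d hd; apply/andP; split.
- exact: hx.
- exact: (allP (IHa _ ha hyb)).
- exact: hy.
- exact: (allP (IHb hxa hb)).
- exact: taddnz.
- exact: (allP (IHa _ ha hb)).
Qed.

Lemma sum_pick (U : seq (seq tN)) (a : seq tN) (g : seq tN -> k) :
  uniq U -> a \in U -> \sum_(d <- U) (d == a)%:R * g d = g a.
Proof.
move=> hU ha; rewrite (big_rem a) //= eqxx mul1r big1_seq ?addr0 //.
move=> d /andP[_ hd]; suff /negbTE -> : d != a by rewrite mul0r.
by apply: contraTneq hd => ->; rewrite mem_rem_uniqF.
Qed.

Lemma Lambda (l : seq (seq tN * k)) (U : seq (seq tN)) (g : seq tN -> k) :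
  uniq U -> all wcomp U -> {subset map fst l <= U} ->
  \sum_(p <- l) p.2 * g p.1 = \sum_(d <- U) Msum l d * g d.
Proof.
move=> hU hw hs.
transitivity (\sum_(d <- U) \sum_(p <- l) p.2 * ((d == p.1)%:R * g d)).
  rewrite exchange_big; apply: eq_big_seq => p hp; rewrite -mulr_sumr sum_pick //.
  by apply: hs; apply: map_f.
apply: eq_big_seq => d hd.
rewrite /Msum mulr_suml; apply: eq_bigr => p _.
by rewrite /M compress_w ?(allP hw) // mulrA.
Qed.

Lemma Lambda2 (a b : seq tN) (U : seq (seq tN)) (g : seq tN -> k) :
  uniq U -> all wcomp U -> {subset qsh a b <= U} -> wcomp a -> wcomp b ->
  \sum_(d <- U) smul (M k a) (M k b) d * g d = \sum_(d <- qsh a b) g d.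
Proof.
move=> hU hw hs ha hb.
transitivity (\sum_(d <- U) \sum_(e <- qsh a b) (d == e)%:R * g d).
  apply: eq_big_seq => d hd.
  rewrite smulM // compress_w ?(allP hw) // mulr_suml.
  by apply: eq_bigr.
rewrite exchange_big; apply: eq_big_seq => e he; rewrite sum_pick //.
exact: hs.
Qed.

Lemma phi_sum (l : seq (seq tN * k)) (F : seq tN * k -> k) :
  \sum_(q <- phi l) F q =
  \sum_(p <- l) (~~ in_Ceps p.1)%:R * F (bar p.1, sg p.1 * p.2).
Proof.
rewrite /phi big_map big_filter big_mkcond; apply: eq_bigr => p _.
by case: ifP => _; rewrite ?mul1r ?mul0r.
Qed.

Lemma smul_Msum (l1 l2 : seq (seq tN * k)) m :
  smul (Msum l1) (Msum l2) m =
  \sum_(p1 <- l1) \sum_(p2 <- l2) p1.2 * p2.2 * smul (M k p1.1) (M k p2.1) m.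
Proof.
rewrite /smul /Msum.
transitivity (\sum_(q <- decomps m) \sum_(p1 <- l1) \sum_(p2 <- l2)
    p1.2 * p2.2 * (M k p1.1 q.1 * M k p2.1 q.2)).
  apply: eq_bigr => q _; rewrite mulr_suml; apply: eq_bigr => p1 _.
  rewrite mulr_sumr; apply: eq_bigr => p2 _; ring.
rewrite exchange_big; apply: eq_bigr => p1 _.
rewrite exchange_big; apply: eq_bigr => p2 _.
by rewrite mulr_sumr.
Qed.

End S.

Theorem lemma3p6 (k : comUnitRingType)
    (hQ : forall n : nat, (n.+1)%:R \is a @GRing.unit k) :
  Msum (phi [:: ([::], 1 : k)]) = Msum [:: ([::], 1 : k)] /\
  (forall l1 l2 l3 : seq (seq tN * k),
    all (fun p => wcomp p.1) l1 -> all (fun p => wcomp p.1) l2 ->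
    all (fun p => wcomp p.1) l3 ->
    Msum l3 = smul (Msum l1) (Msum l2) ->
    Msum (phi l3) = smul (Msum (phi l1)) (Msum (phi l2))).
Proof.
split.
  by rewrite /phi /= expr0 mul1r.
move=> l1 l2 l3 h1 h2 h3 H; apply: functional_extensionality => m.
pose g := fun d : seq tN => (~~ in_Ceps d)%:R * sg d * (compress m == bar d)%:R : k.
pose U := undup ([seq p.1 | p <- l3] ++ flatten [seq qsh p1.1 p2.1 | p1 <- l1, p2 <- l2]).
have hU : uniq U := undup_uniq _.
have hw : all wcomp U.
  apply/allP => d; rewrite mem_undup mem_cat => /orP[/mapP[p hp ->]|/flattenP[s /allpairsP[[p1 p2] [hp1 hp2 ->]] hd]].
  - exact: (allP h3 p hp).
  - exact: (allP (qsh_w (allP h1 _ hp1) (allP h2 _ hp2))).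
have hs3 : {subset map fst l3 <= U} by move=> d hd; rewrite mem_undup mem_cat hd.
have hsq : forall p1 p2, p1 \in l1 -> p2 \in l2 -> {subset qsh p1.1 p2.1 <= U}.
  move=> p1 p2 hp1 hp2 d hd; rewrite mem_undup mem_cat; apply/orP; right.
  apply/flattenP; exists (qsh p1.1 p2.1) => //.
  exact: (allpairs_f (fun p1 p2 => qsh p1.1 p2.1)).
transitivity (\sum_(p1 <- l1) \sum_(p2 <- l2) p1.2 * p2.2 *
   ((~~ in_Ceps p1.1)%:R * (~~ in_Ceps p2.1)%:R * (sg p1.1 * sg p2.1) *
     \sum_(d <- qsh (bar p1.1) (bar p2.1)) (compress m == d)%:R)).
  transitivity (\sum_(p <- l3) p.2 * g p.1).
    rewrite /Msum phi_sum; apply: eq_bigr => p _; rewrite /g /M /=; ring.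
  rewrite (Lambda g hU hw hs3) H.
  transitivity (\sum_(p1 <- l1) \sum_(p2 <- l2) p1.2 * p2.2 *
      \sum_(d <- U) smul (M k p1.1) (M k p2.1) d * g d).
    under eq_bigr => d _ do rewrite smul_Msum mulr_suml.
    rewrite exchange_big; apply: eq_bigr => p1 _.
    under eq_bigr => d _ do rewrite mulr_suml.
    rewrite exchange_big; apply: eq_bigr => p2 _.
    rewrite mulr_sumr; apply: eq_bigr => d _; ring.
  apply: eq_big_seq => p1 hp1; apply: eq_big_seq => p2 hp2.
  rewrite (Lambda2 g hU hw (hsq _ _ hp1 hp2) (allP h1 _ hp1) (allP h2 _ hp2)) /g.
  by rewrite (qshB (fun d => (compress m == d)%:R) (allP h1 _ hp1) (allP h2 _ hp2)).
symmetry.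
rewrite smul_Msum phi_sum; apply: eq_big_seq => p1 hp1.
rewrite phi_sum mulr_sumr; apply: eq_big_seq => p2 hp2 /=.
rewrite smulM ?bar_w ?(allP h1 _ hp1) ?(allP h2 _ hp2) //.
ring.
Qed.
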